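(* Let $(\Omega,\mathcal{F})$ be a measurable space, $\mathcal{P}$ a nonempty set of probability measures on it, $\hat{\mathbb{E}}[Z]=\sup_{P\in\mathcal{P}}E_P[Z]$, and let $X,Y$ be random variables with $\hat{\mathbb{E}}[X^2]+\hat{\mathbb{E}}[Y^2]<\infty$. Then $$\overline{C}(X,Y)=\sup_{\mu_2\in\mathbb{R}}\inf_{\mu_1\in\mathbb{R}}\hat{\mathbb{E}}[(X-\mu_1)(Y-\mu_2)],\qquad \underline{C}(X,Y)=\inf_{\mu_2\in\mathbb{R}}\sup_{\mu_1\in\mathbb{R}}\left(-\hat{\mathbb{E}}[-(X-\mu_1)(Y-\mu_2)]\right).$$
   Context: For a random variable $W$ with $\hat{\mathbb{E}}[W^2]<\infty$: $\overline{\mu}_W=\hat{\mathbb{E}}[W]$, $\underline{\mu}_W=-\hat{\mathbb{E}}[-W]$, $M_W=[\underline{\mu}_W,\overline{\mu}_W]$. Upper covariance $\overline{C}(X,Y)=\max_{\mu_2\in M_Y}\min_{\mu_1\in M_X}\hat{\mathbb{E}}[(X-\mu_1)(Y-\mu_2)]$; lower covariance $\underline{C}(X,Y)=\min_{\mu_2\in M_Y}\max_{\mu_1\in M_X}\left(-\hat{\mathbb{E}}[-(X-\mu_1)(Y-\mu_2)]\right)$. *)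

(* Defs.v *)
From HB Require Import structures.
From mathcomp Require Import all_boot all_order all_algebra.
From mathcomp Require Import all_classical all_reals all_analysis.
Set Implicit Arguments. Unset Strict Implicit. Unset Printing Implicit Defensive.
Import Order.TTheory GRing.Theory Num.Theory.
Local Open Scope classical_set_scope.
Local Open Scope ring_scope.
Local Open Scope ereal_scope.

Section sublinear.
Context (d : measure_display) (T : measurableType d) (R : realType).
Variable Pset : set (probability T R).

Definition Ehat (Z : T -> R) : \bar R :=
  ereal_sup [set \int[P]_x (Z x)%:E | P in Pset].

Definition Mset (W : T -> R) : set R :=
  [set m : R | - Ehat (fun w => - W w)%R <= m%:E /\ m%:E <= Ehat W].

Definition upperC (X Y : T -> R) : \bar R :=
  ereal_sup [set ereal_inf [set Ehat (fun w => (X w - m1) * (Y w - m2))%R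
                           | m1 in Mset X] | m2 in Mset Y].

Definition lowerC (X Y : T -> R) : \bar R :=
  ereal_inf [set ereal_sup [set - Ehat (fun w => - ((X w - m1) * (Y w - m2)))%R
                           | m1 in Mset X] | m2 in Mset Y].
End sublinear.

(* Main.v *)
Require Import Defs.
From HB Require Import structures.
From mathcomp Require Import all_boot all_order all_algebra.
From mathcomp Require Import all_classical all_reals all_analysis.
From mathcomp Require Import lra ring measurable_realfun.
Import Order.TTheory GRing.Theory Num.Theory.
Local Open Scope classical_set_scope.
Local Open Scope ring_scope.
Local Open Scope ereal_scope.

Local Open Scope ring_scope.
Section meas.
Context d (T : measurableType d) (R : realType) (P : probability T R) (X Y : T -> R).
Hypotheses (mX : measurable_fun setT X) (mY : measurable_fun setT Y).
Hypotheses (iX2 : (\int[P]_w (X w ^+ 2)%:E < +oo)%E)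
           (iY2 : (\int[P]_w (Y w ^+ 2)%:E < +oo)%E).

Local Notation intg f := (P.-integrable setT (EFin \o f)).

Lemma intD {f g : T -> R} : intg f -> intg g -> intg (fun w => f w + g w).
Proof.
move=> hf hg; apply: eq_integrable (integrableD measurableT hf hg) => //.
Qed.

Lemma intZ (k : R) {f : T -> R} : intg f -> intg (fun w => k * f w).
Proof.
move=> hf; apply: eq_integrable (integrableZl measurableT k hf) => //.
Qed.

Lemma intC (k : R) : intg (fun _ => k).
Proof. exact: finite_measure_integrable_cst. Qed.

Lemma intsq (f : T -> R) : measurable_fun setT f -> (\int[P]_w (f w ^+ 2)%:E < +oo)%E ->
  intg (fun w => f w ^+ 2).
Proof.
move=> mf hf; apply/integrableP; split.
  by apply/measurable_EFinP; exact: measurable_funX.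
rewrite (eq_integral (fun w => (f w ^+ 2)%:E)) //.
by move=> w _; rewrite /= ger0_norm // sqr_ge0.
Qed.

Lemma iXX : intg (fun w => X w ^+ 2). Proof. exact: intsq. Qed.
Lemma iYY : intg (fun w => Y w ^+ 2). Proof. exact: intsq. Qed.

Lemma iX : intg X.
Proof.
apply: (le_integrable measurableT (g := EFin \o (fun w => 1 + X w ^+ 2))).
- exact/measurable_EFinP.
- move=> w _; rewrite /= lee_fin.
  have h := normr_ge0 (X w); have e := real_normK (num_real (X w)).
  rewrite [X in _ <= X]ger0_norm; last by rewrite addr_ge0 // sqr_ge0.
  nra.
- exact: intD (intC 1) iXX.
Qed.

Lemma iY : intg Y.
Proof.
apply: (le_integrable measurableT (g := EFin \o (fun w => 1 + Y w ^+ 2))).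
- exact/measurable_EFinP.
- move=> w _; rewrite /= lee_fin.
  have h := normr_ge0 (Y w); have e := real_normK (num_real (Y w)).
  rewrite [X in _ <= X]ger0_norm; last by rewrite addr_ge0 // sqr_ge0.
  nra.
- exact: intD (intC 1) iYY.
Qed.

Lemma iXY : intg (fun w => X w * Y w).
Proof.
apply: (le_integrable measurableT (g := EFin \o (fun w => X w ^+ 2 + Y w ^+ 2))).
- by apply/measurable_EFinP; exact: measurable_funM.
- move=> w _; rewrite /= lee_fin normrM.
  have h1 := normr_ge0 (X w); have e1 := real_normK (num_real (X w)).
  have h2 := normr_ge0 (Y w); have e2 := real_normK (num_real (Y w)).
  rewrite [X in _ <= X]ger0_norm; last by rewrite addr_ge0 // sqr_ge0.
  nra.
- exact: intD iXX iYY.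
Qed.

Definition lf (a b c e p q : R) :=
  fun w => a * (X w * Y w) + b * X w + c * Y w + e + p * X w ^+ 2 + q * Y w ^+ 2.

Lemma ilf a b c e p q : intg (lf a b c e p q).
Proof.
rewrite /lf.
apply: intD; last exact: intZ _ iYY.
apply: intD; last exact: intZ _ iXX.
apply: intD; last exact: intC.
apply: intD; last exact: intZ _ iY.
apply: intD; last exact: intZ _ iX.
exact: intZ _ iXY.
Qed.

Let Ri f := Rintegral P setT f.

Lemma RD {f g : T -> R} : intg f -> intg g -> Ri (fun w => f w + g w) = Ri f + Ri g.
Proof. by move=> hf hg; rewrite /Ri RintegralD. Qed.
Lemma RZ (k : R) {f : T -> R} : intg f -> Ri (fun w => k * f w) = k * Ri f.
Proof. by move=> hf; rewrite /Ri RintegralZl. Qed.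
Lemma RC (k : R) : Ri (fun _ => k) = k.
Proof.
rewrite /Ri Rintegral_cst //; have h := probability_setT P.
by move: h; set z := P setT => h; rewrite -[X in fine X]/z h mulr1.
Qed.

Lemma Rint_lf a b c e p q : Ri (lf a b c e p q) =
  a * Ri (fun w => X w * Y w) + b * Ri X + c * Ri Y + e
  + p * Ri (fun w => X w ^+ 2) + q * Ri (fun w => Y w ^+ 2).
Proof.
have i1 := intZ a iXY. have i2 := intZ b iX. have i3 := intZ c iY.
have i4 := intC e. have i5 := intZ p iXX. have i6 := intZ q iYY.
have i12 := intD i1 i2. have i123 := intD i12 i3. have i1234 := intD i123 i4.
have i12345 := intD i1234 i5.
rewrite /lf (RD i12345 i6) (RD i1234 i5) (RD i123 i4) (RD i12 i3) (RD i1 i2).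
by rewrite (RZ a iXY) (RZ b iX) (RZ c iY) (RZ p iXX) (RZ q iYY) RC.
Qed.

Lemma EFin_Ri f : intg f -> (\int[P]_w (f w)%:E)%E = (Ri f)%:E.
Proof. by move=> hf; rewrite /Ri /Rintegral fineK // integrable_fin_num. Qed.

Lemma int_lf a b c e p q : (\int[P]_w (lf a b c e p q w)%:E)%E =
  (a * Ri (fun w => X w * Y w) + b * Ri X + c * Ri Y + e
  + p * Ri (fun w => X w ^+ 2) + q * Ri (fun w => Y w ^+ 2))%:E.
Proof. by rewrite EFin_Ri ?Rint_lf //; exact: ilf. Qed.

Lemma le_lf a b c e p q a' b' c' e' p' q' :
  (forall w, lf a b c e p q w <= lf a' b' c' e' p' q' w) ->
  Ri (lf a b c e p q) <= Ri (lf a' b' c' e' p' q').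
Proof.
move=> h; apply: le_Rintegral => //; [exact: (ilf a b c e p q)|exact: (ilf a' b' c' e' p' q')|].
by move=> w _; exact: h.
Qed.

Lemma Ri_sq_ge0 : 0 <= Ri (fun w => X w ^+ 2).
Proof. by apply: Rintegral_ge0 => w _; exact: sqr_ge0. Qed.

Lemma Ri_sqY_ge0 : 0 <= Ri (fun w => Y w ^+ 2).
Proof. by apply: Rintegral_ge0 => w _; exact: sqr_ge0. Qed.

Lemma bnd_x : `|Ri X| <= 1 + Ri (fun w => X w ^+ 2).
Proof.
have h1 := @le_lf 0 1 0 0 0 0 0 0 0 1 1 0 (fun w => ltac:(rewrite /lf; nra)).
have h2 := @le_lf 0 (-1) 0 0 0 0 0 0 0 1 1 0 (fun w => ltac:(rewrite /lf; nra)).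
rewrite !Rint_lf in h1 h2; rewrite ler_norml; apply/andP; split; lra.
Qed.

Lemma bnd_y : `|Ri Y| <= 1 + Ri (fun w => Y w ^+ 2).
Proof.
have h1 := @le_lf 0 0 1 0 0 0 0 0 0 1 0 1 (fun w => ltac:(rewrite /lf; nra)).
have h2 := @le_lf 0 0 (-1) 0 0 0 0 0 0 1 0 1 (fun w => ltac:(rewrite /lf; nra)).
rewrite !Rint_lf in h1 h2; rewrite ler_norml; apply/andP; split; lra.
Qed.

Lemma bnd_c : `|Ri (fun w => X w * Y w)| <= Ri (fun w => X w ^+ 2) + Ri (fun w => Y w ^+ 2).
Proof.
have h1 := @le_lf 1 0 0 0 0 0 0 0 0 0 1 1 (fun w => ltac:(rewrite /lf; nra)).
have h2 := @le_lf (-1) 0 0 0 0 0 0 0 0 0 1 1 (fun w => ltac:(rewrite /lf; nra)).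
rewrite !Rint_lf in h1 h2; rewrite ler_norml; apply/andP; split; lra.
Qed.

Lemma L_eq m1 m2 : (\int[P]_w ((X w - m1) * (Y w - m2))%:E)%E =
  (Ri (fun w => X w * Y w) - m1 * Ri Y - m2 * Ri X + m1 * m2)%:E.
Proof.
rewrite (eq_integral (fun w => (lf 1 (- m2) (- m1) (m1 * m2) 0 0 w)%:E)).
  by rewrite int_lf; congr EFin; ring.
by move=> w _; congr EFin; rewrite /lf; ring.
Qed.

Lemma L_neg m1 m2 : (\int[P]_w (- ((X w - m1) * (Y w - m2)))%:E)%E =
  (- (Ri (fun w => X w * Y w) - m1 * Ri Y - m2 * Ri X + m1 * m2))%:E.
Proof.
rewrite (eq_integral (fun w => (lf (-1) m2 m1 (- (m1 * m2)) 0 0 w)%:E)).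
  by rewrite int_lf; congr EFin; ring.
by move=> w _; congr EFin; rewrite /lf; ring.
Qed.

Lemma X_eq : (\int[P]_w (X w)%:E)%E = (Ri X)%:E.
Proof. by rewrite EFin_Ri //; exact: iX. Qed.
Lemma Y_eq : (\int[P]_w (Y w)%:E)%E = (Ri Y)%:E.
Proof. by rewrite EFin_Ri //; exact: iY. Qed.

Lemma X_neg : (\int[P]_w (- X w)%:E)%E = (- Ri X)%:E.
Proof.
rewrite (eq_integral (fun w => (lf 0 (-1) 0 0 0 0 w)%:E)).
  by rewrite int_lf; congr EFin; ring.
by move=> w _; congr EFin; rewrite /lf; ring.
Qed.

Lemma Y_neg : (\int[P]_w (- Y w)%:E)%E = (- Ri Y)%:E.
Proof.
rewrite (eq_integral (fun w => (lf 0 0 (-1) 0 0 0 w)%:E)).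
  by rewrite int_lf; congr EFin; ring.
by move=> w _; congr EFin; rewrite /lf; ring.
Qed.

End meas.
Arguments iXX {d T R P X}. Arguments X_eq {d T R P X}. Arguments Y_eq {d T R P Y}.
Arguments bnd_x {d T R P X Y}. Arguments bnd_y {d T R P X Y}. Arguments bnd_c {d T R P X Y}.
Arguments L_eq {d T R P X Y}. Arguments L_neg {d T R P X Y}.
Arguments X_neg {d T R P X Y}. Arguments Y_neg {d T R P X Y}.

Local Open Scope ereal_scope.
Section pure.
Context (R : realType) (U : Type) (I : set U) (x y v : U -> R) (B : R).
Hypothesis I0 : I !=set0.
Hypothesis hx : forall P, I P -> (`|x P| <= B)%R.
Hypothesis hy : forall P, I P -> (`|y P| <= B)%R.
Hypothesis hv : forall P, I P -> (`|v P| <= B)%R.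

Definition Eh (g : U -> R) : \bar R := ereal_sup [set (g P)%:E | P in I].
Definition Lq (m1 m2 : R) (P : U) : R := (v P + (x P - m1) * (y P - m2))%R.
Definition Iv (a b : \bar R) := [set m : R | a <= m%:E /\ m%:E <= b].

Lemma Eh_ub g {P} : I P -> (g P)%:E <= Eh g.
Proof. by move=> IP; apply: ereal_sup_ubound; exists P. Qed.

Lemma Eh_le g r : (forall P, I P -> (g P <= r)%R) -> Eh g <= r%:E.
Proof. by move=> h; apply: ge_ereal_sup => _ [P IP <-]; rewrite lee_fin h. Qed.

Lemma Eh_fin {g} : (forall P, I P -> (`|g P| <= B)%R) -> Eh g = (fine (Eh g))%:E.
Proof.
move=> hg; rewrite fineK //; apply/fin_numPlt/andP; split.
  by case: I0 => P IP; exact: (lt_le_trans (ltNyr (g P)) (Eh_ub g IP)).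
apply: (le_lt_trans (@Eh_le g B _)); last exact: ltry.
by move=> P IP; apply: le_trans (hg P IP); exact: ler_norm.
Qed.


Lemma key_real {s xP xQ vP vQ bP bQ : R} :
  (0 < bP)%R -> (bQ < 0)%R ->
  (xQ - (s - vQ) / bQ < xP - (s - vP) / bP)%R ->
  exists c0 : R, (s < c0)%R /\ forall m1 : R,
    (c0 <= vP + (xP - m1) * bP \/ c0 <= vQ + (xQ - m1) * bQ)%R.
Proof.
move=> bP0 bQ0 hlt.
set qP := ((s - vP) / bP)%R in hlt *; set qQ := ((s - vQ) / bQ)%R in hlt *.
have eP : vP = (s - qP * bP)%R by rewrite /qP divfK ?gt_eqF //; ring.
have eQ : vQ = (s - qQ * bQ)%R by rewrite /qQ divfK ?lt_eqF //; ring.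
have D0 : (0 < bP - bQ)%R by lra.
pose c0 := ((-bQ * (vP + xP * bP) + bP * (vQ + xQ * bQ)) / (bP - bQ))%R.
have ec : (c0 * (bP - bQ) = -bQ * (vP + xP * bP) + bP * (vQ + xQ * bQ))%R.
  by rewrite /c0 divfK // gt_eqF.
exists c0; split.
  have h3 : (0 < bP * (- bQ) * ((xP - qP) - (xQ - qQ)))%R.
    by rewrite !mulr_gt0 // ?oppr_gt0 // subr_gt0.
  have : (s * (bP - bQ) < c0 * (bP - bQ))%R.
    rewrite ec eP eQ -subr_gt0; apply: (lt_le_trans h3).
    by rewrite le_eqVlt; apply/orP; left; apply/eqP; ring.
  by rewrite ltr_pM2r.
move=> m1.
case: (leP c0 (vP + (xP - m1) * bP)%R) => h1; first by left.
case: (leP c0 (vQ + (xQ - m1) * bQ)%R) => h2; first by right.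
exfalso.
have : (c0 * (bP - bQ) < c0 * (bP - bQ))%R; last by rewrite ltxx.
rewrite [X in (_ < X)%R]ec.
have -> : (-bQ * (vP + xP * bP) + bP * (vQ + xQ * bQ) =
   -bQ * (vP + (xP - m1) * bP) + bP * (vQ + (xQ - m1) * bQ))%R by ring.
nra.
Qed.


Let xu := fine (Eh x).
Let xl := (- fine (Eh (fun P => - x P)))%R.
Let yu := fine (Eh y).
Let yl := (- fine (Eh (fun P => - y P)))%R.

Lemma hxN P : I P -> (`|(- x P)| <= B)%R. Proof. by move=> IP; rewrite normrN hx. Qed.
Lemma hyN P : I P -> (`|(- y P)| <= B)%R. Proof. by move=> IP; rewrite normrN hy. Qed.

Lemma IvX m : Iv (- Eh (fun P => - x P)%R) (Eh x) m <-> (xl <= m /\ m <= xu)%R.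
Proof.
by rewrite /Iv /= (Eh_fin hx) (Eh_fin hxN) -EFinN !lee_fin.
Qed.

Lemma IvY m : Iv (- Eh (fun P => - y P)%R) (Eh y) m <-> (yl <= m /\ m <= yu)%R.
Proof.
by rewrite /Iv /= (Eh_fin hy) (Eh_fin hyN) -EFinN !lee_fin.
Qed.

Lemma xbnd {P} : I P -> (xl <= x P /\ x P <= xu)%R.
Proof.
move=> IP; split.
  rewrite /xl lerNl -lee_fin -(Eh_fin hxN); exact: (Eh_ub (fun P => - x P)%R IP).
by rewrite -lee_fin -(Eh_fin hx); exact: Eh_ub.
Qed.

Lemma ybnd {P} : I P -> (yl <= y P /\ y P <= yu)%R.
Proof.
move=> IP; split.
  rewrite /yl lerNl -lee_fin -(Eh_fin hyN); exact: (Eh_ub (fun P => - y P)%R IP).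
by rewrite -lee_fin -(Eh_fin hy); exact: Eh_ub.
Qed.

Lemma helly m2 s : (forall P, I P -> v P <= s)%R ->
  ereal_inf [set Eh (Lq m1 m2) | m1 in [set: R]] <= s%:E ->
  exists2 m, (xl <= m /\ m <= xu)%R & Eh (Lq m m2) <= s%:E.
Proof.
move=> vs Gs.
pose t P := (x P - (s - v P) / (y P - m2))%R.
pose A := [set t P | P in [set P | I P /\ (0 < y P - m2)%R]] `|` [set xl].
have xlu : (xl <= xu)%R.
  by case: I0 => P IP; have [h1 h2] := xbnd IP; exact: le_trans h2.
have key : forall P Q, I P -> I Q -> (0 < y P - m2)%R -> (y Q - m2 < 0)%R ->
    (t P <= t Q)%R.
  move=> P Q IP IQ bP bQ; rewrite leNgt; apply/negP => hlt.
  have [c0 [sc0 hc]] := key_real bP bQ hlt.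
  have : c0%:E <= ereal_inf [set Eh (Lq m1 m2) | m1 in [set: R]].
    apply: le_ereal_inf_tmp => _ [m1 _ <-].
    have [c0P|c0Q] := hc m1.
      by apply: le_trans (Eh_ub (Lq m1 m2) IP); rewrite lee_fin /Lq.
    by apply: le_trans (Eh_ub (Lq m1 m2) IQ); rewrite lee_fin /Lq.
  move=> /le_trans /(_ Gs); rewrite lee_fin => /(lt_le_trans sc0).
  by rewrite ltxx.
have tle P : I P -> (0 < y P - m2)%R -> (t P <= x P)%R.
  move=> IP bP; have : (0 <= (s - v P) / (y P - m2))%R by rewrite divr_ge0 ?(ltW bP) ?subr_ge0 ?vs.
  by rewrite /t; lra.
have Aub : ubound A xu.
  move=> a [[Q [IQ bQ] <-]|/= ->] //.
  by apply: le_trans (tle Q IQ bQ) _; have [] := xbnd IQ.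
have hasA : has_sup A by split; [exists xl; right|exists xu].
have mge : (xl <= sup A)%R by apply: sup_upper_bound => //; right.
have mle : (sup A <= xu)%R by apply: ge_sup => //; exists xl; right.
exists (sup A) => //.
apply: Eh_le => P IP; rewrite /Lq.
have [bP|bP|bP] := ltgtP (y P - m2)%R 0%R.
- have : (sup A <= t P)%R.
    apply: ge_sup; first by exists xl; right.
    move=> a [[Q [IQ bQ] <-]|/= ->]; first exact: key.
    have [h1 h2] := xbnd IP; apply: le_trans h1 _.
    rewrite /t; set q := ((s - v P) / (y P - m2))%R.
    have eq : (q * (y P - m2) = s - v P)%R by rewrite /q divfK // lt_eqF.
    have := vs P IP; nra.
  rewrite /t => h.
  set q := ((s - v P) / (y P - m2))%R in h.
  have eq : (q * (y P - m2) = s - v P)%R by rewrite /q divfK // lt_eqF.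
  nra.
- have : (t P <= sup A)%R by apply: sup_upper_bound => //; left; exists P.
  rewrite /t => h.
  set q := ((s - v P) / (y P - m2))%R in h.
  have eq : (q * (y P - m2) = s - v P)%R by rewrite /q divfK // gt_eqF.
  nra.
- by rewrite bP mulr0 addr0 vs.
Qed.


Lemma Gninf m2 : (m2 < yl \/ yu < m2)%R ->
  forall r, ereal_inf [set Eh (Lq m1 m2) | m1 in [set: R]] <= r%:E.
Proof.
move=> h r; case: h => h.
- pose d := (yl - m2)%R.
  have d0 : (0 < d)%R by rewrite /d subr_gt0.
  pose u := (`|B - r| / d)%R.
  have eu : (u * d = `|B - r|)%R by rewrite /u divfK // gt_eqF.
  have u0 : (0 <= u)%R by rewrite /u divr_ge0 // ltW.
  have br : (B - r <= `|B - r|)%R by exact: ler_norm.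
  apply: ge_ereal_inf; exists (Eh (Lq (B + u) m2)); first by exists (B + u)%R.
  apply: Eh_le => P IP; rewrite /Lq.
  have [xa xb] : (- B <= x P /\ x P <= B)%R by apply/andP; rewrite -ler_norml; exact: hx.
  have vb : (v P <= B)%R by apply: le_trans (hv P IP); exact: ler_norm.
  have [yb _] := ybnd IP.
  have h1 := mulr_ge0 (_ : (0 <= B + u - x P)%R) (_ : (0 <= y P - m2 - d)%R).
  have h2 := mulr_ge0 (_ : (0 <= B - x P)%R) (ltW d0).
  have /h1 h1' : (0 <= B + u - x P)%R by lra.
  have /h1' h1'' : (0 <= y P - m2 - d)%R by rewrite /d; lra.
  have /h2 h2' : (0 <= B - x P)%R by lra.
  nra.
- pose d := (m2 - yu)%R.
  have d0 : (0 < d)%R by rewrite /d subr_gt0.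
  pose u := (`|B - r| / d)%R.
  have eu : (u * d = `|B - r|)%R by rewrite /u divfK // gt_eqF.
  have u0 : (0 <= u)%R by rewrite /u divr_ge0 // ltW.
  have br : (B - r <= `|B - r|)%R by exact: ler_norm.
  apply: ge_ereal_inf; exists (Eh (Lq (- (B + u)) m2)); first by exists (- (B + u))%R.
  apply: Eh_le => P IP; rewrite /Lq.
  have [xa xb] : (- B <= x P /\ x P <= B)%R by apply/andP; rewrite -ler_norml; exact: hx.
  have vb : (v P <= B)%R by apply: le_trans (hv P IP); exact: ler_norm.
  have [_ yb] := ybnd IP.
  have h1 := mulr_ge0 (_ : (0 <= x P + B + u)%R) (_ : (0 <= m2 - y P - d)%R).
  have h2 := mulr_ge0 (_ : (0 <= x P + B)%R) (ltW d0).
  have /h1 h1' : (0 <= x P + B + u)%R by lra.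
  have /h1' h1'' : (0 <= m2 - y P - d)%R by rewrite /d; lra.
  have /h2 h2' : (0 <= x P + B)%R by lra.
  nra.
Qed.


Lemma upper_pure :
  ereal_sup [set ereal_inf [set Eh (Lq m1 m2) | m1 in Iv (- Eh (fun P => - x P)%R) (Eh x)]
            | m2 in Iv (- Eh (fun P => - y P)%R) (Eh y)]
  = ereal_sup [set ereal_inf [set Eh (Lq m1 m2) | m1 in [set: R]] | m2 in [set: R]].
Proof.
set RHS := ereal_sup [set ereal_inf [set Eh (Lq m1 m2) | m1 in [set: R]] | m2 in [set: R]].
have vS P : I P -> (v P)%:E <= RHS.
  move=> IP; apply: le_ereal_sup_tmp.
  exists (ereal_inf [set Eh (Lq m1 (y P)) | m1 in [set: R]]); first by exists (y P).
  apply: le_ereal_inf_tmp => _ [m1 _ <-]; apply: le_trans (Eh_ub _ IP).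
  by rewrite lee_fin /Lq subrr mulr0 addr0.
apply/eqP; rewrite eq_le; apply/andP; split.
- apply: ge_ereal_sup => _ [m2 _ <-].
  have [->|Rlt] : RHS = +oo \/ RHS < +oo.
    by move: (leey RHS); rewrite le_eqVlt => /orP[/eqP ->|->]; [left|right].
    exact: leey.
  case: I0 => P0 IP0.
  have Rfin : RHS = (fine RHS)%:E.
    rewrite fineK //; apply/fin_numPlt/andP; split => //.
    exact: (lt_le_trans (ltNyr (v P0)) (vS P0 IP0)).
  set s := fine RHS in Rfin.
  have vs : forall P, I P -> (v P <= s)%R by move=> P IP; rewrite -lee_fin -Rfin vS.
  have Gs : ereal_inf [set Eh (Lq m1 m2) | m1 in [set: R]] <= s%:E.
    by rewrite -Rfin; apply: ereal_sup_ubound; exists m2.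
  have [m hm hE] := helly m2 s vs Gs.
  rewrite Rfin; apply: ge_ereal_inf; exists (Eh (Lq m m2)) => //.
  by exists m => //; apply/IvX.
- apply: ge_ereal_sup => _ [m2 _ <-].
  have [h1|h1] := ltP m2 yl.
    have := Gninf m2 (or_introl h1).
    case: (ereal_inf _) => [g| |] hg.
    + by have := hg (g - 1)%R; rewrite lee_fin => hh; exfalso; lra.
    + by have := hg 0%R.
    + exact: leNye.
  have [h2|h2] := ltP yu m2.
    have := Gninf m2 (or_intror h2).
    case: (ereal_inf _) => [g| |] hg.
    + by have := hg (g - 1)%R; rewrite lee_fin => hh; exfalso; lra.
    + by have := hg 0%R.
    + exact: leNye.
  have hm2 : Iv (- Eh (fun P => - y P)%R) (Eh y) m2 by apply/IvY.
  apply: le_trans (ereal_sup_ubound (ex_intro2 _ _ m2 hm2 erefl)).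
  by apply: ereal_inf_le_tmp; apply: image_subset; exact: subsetT.
Qed.

End pure.
Arguments Eh {R U}. Arguments Lq {R U}. Arguments Iv {R}.
Arguments upper_pure {R U I x y v B}.

Section lower.
Context (R : realType).

Lemma inf_sup_neg (F : R -> R -> \bar R) (A Bs : set R) :
  ereal_inf [set ereal_sup [set - F m1 m2 | m1 in A] | m2 in Bs] =
  - ereal_sup [set ereal_inf [set F m1 m2 | m1 in A] | m2 in Bs].
Proof.
rewrite /ereal_inf image_comp; congr (- ereal_sup _); apply: eq_imagel => m2 _ /=.
by rewrite image_comp.
Qed.

Lemma reparam (f : R -> \bar R) (A A' : set R) :
  (forall m, A m <-> A' (- m)%R) -> [set f (- m)%R | m in A] = [set f m | m in A'].
Proof.
move=> h; apply/seteqP; split => _ [m hm <-].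
  by exists (- m)%R => //; apply/h.
by exists (- m)%R; [apply/h; rewrite opprK|rewrite opprK].
Qed.

End lower.
Arguments reparam {R}. Arguments inf_sup_neg {R}.

Lemma lower_pure (R : realType) (U : Type) (I : set U) (x y v : U -> R) (B : R) :
  I !=set0 ->
  (forall P, I P -> (`|x P| <= B)%R) ->
  (forall P, I P -> (`|y P| <= B)%R) ->
  (forall P, I P -> (`|v P| <= B)%R) ->
  ereal_inf [set ereal_sup [set - Eh I (fun P => - Lq x y v m1 m2 P)%R
                            | m1 in Iv (- Eh I (fun P => - x P)%R) (Eh I x)]
            | m2 in Iv (- Eh I (fun P => - y P)%R) (Eh I y)]
  = ereal_inf [set ereal_sup [set - Eh I (fun P => - Lq x y v m1 m2 P)%R
                            | m1 in [set: R]] | m2 in [set: R]].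
Proof.
move=> I0 hx hy hv.
rewrite !inf_sup_neg; congr (- _).
have hx' : forall P, I P -> (`|(fun P => - x P) P| <= B)%R by move=> P IP; rewrite normrN hx.
have hv' : forall P, I P -> (`|(fun P => - v P) P| <= B)%R by move=> P IP; rewrite normrN hv.
have := upper_pure I0 hx' hy hv'.
have eL : forall m1 m2, Eh I (fun P => - Lq x y v m1 m2 P)%R =
    Eh I (Lq (fun P => - x P)%R y (fun P => - v P)%R (- m1)%R m2).
  by move=> m1 m2; congr Eh; apply: funext => P; rewrite /Lq; ring.
have eX : Eh I (fun P => - (fun P => - x P) P)%R = Eh I x.
  by congr Eh; apply: funext => P /=; rewrite opprK.
have h1 : forall m, Iv (- Eh I (fun P => - x P)%R) (Eh I x) m <->
    Iv (- Eh I (fun P => - (fun P => - x P) P)%R) (Eh I (fun P => - x P)%R) (- m)%R.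
  move=> m; rewrite eX /Iv /= EFinN leeN2 leeNl; tauto.
have h2 : forall m, [set: R] m <-> [set: R] (- m)%R by [].
have eS : forall (A A' : set R), (forall m, A m <-> A' (- m)%R) ->
  (fun m2 => ereal_inf [set Eh I (fun P => - Lq x y v m1 m2 P)%R | m1 in A]) =
  (fun m2 => ereal_inf [set Eh I (Lq (fun P => - x P)%R y (fun P => - v P)%R m1 m2) | m1 in A']).
  move=> A A' hA; apply: funext => m2; congr ereal_inf.
  rewrite -(reparam (fun m1 => Eh I (Lq (fun P => - x P)%R y (fun P => - v P)%R m1 m2)) _ _ hA).
  by apply: eq_imagel => m1 _; rewrite eL.
by rewrite /= (eS _ _ h1) (eS _ _ h2).
Qed.

Local Open Scope ereal_scope.

Lemma congr_supinf (R : realType) (F G : R -> R -> \bar R) (A Bs : set R) :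
  (forall m1 m2, F m1 m2 = G m1 m2) ->
  ereal_sup [set ereal_inf [set F m1 m2 | m1 in A] | m2 in Bs] =
  ereal_sup [set ereal_inf [set G m1 m2 | m1 in A] | m2 in Bs].
Proof.
by move=> h; have -> : F = G by apply: funext => m1; apply: funext => m2; exact: h.
Qed.

Lemma congr_infsup (R : realType) (F G : R -> R -> \bar R) (A Bs : set R) :
  (forall m1 m2, F m1 m2 = G m1 m2) ->
  ereal_inf [set ereal_sup [set F m1 m2 | m1 in A] | m2 in Bs] =
  ereal_inf [set ereal_sup [set G m1 m2 | m1 in A] | m2 in Bs].
Proof.
by move=> h; have -> : F = G by apply: funext => m1; apply: funext => m2; exact: h.
Qed.

Theorem proposition3p10 (d : measure_display) (T : measurableType d) (R : realType)
  (Pset : set (probability T R)) (X Y : T -> R) :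
  Pset !=set0 ->
  measurable_fun setT X -> measurable_fun setT Y ->
  Ehat Pset (fun w => X w ^+ 2)%R + Ehat Pset (fun w => Y w ^+ 2)%R < +oo ->
  upperC Pset X Y =
    ereal_sup [set ereal_inf [set Ehat Pset (fun w => (X w - m1) * (Y w - m2))%R
                             | m1 in [set: R]] | m2 in [set: R]]
  /\
  lowerC Pset X Y =
    ereal_inf [set ereal_sup [set - Ehat Pset (fun w => - ((X w - m1) * (Y w - m2)))%R
                             | m1 in [set: R]] | m2 in [set: R]].
Proof.
move=> P0 mX mY hfin.
have hE0 : forall Z : T -> R, (forall w, 0 <= Z w)%R -> 0 <= Ehat Pset Z.
  move=> Z hZ; case: P0 => P IP.
  apply: le_trans (ereal_sup_ubound (ex_intro2 _ _ P IP erefl)).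
  by apply: integral_ge0 => w _; rewrite lee_fin.
have hX0 := hE0 _ (fun w => sqr_ge0 (X w)).
have hY0 := hE0 _ (fun w => sqr_ge0 (Y w)).
have hX2 : Ehat Pset (fun w => X w ^+ 2)%R < +oo.
  by apply: le_lt_trans hfin; exact: leeDl.
have hY2 : Ehat Pset (fun w => Y w ^+ 2)%R < +oo.
  by apply: le_lt_trans hfin; exact: leeDr.
have finA : Ehat Pset (fun w => X w ^+ 2)%R = (fine (Ehat Pset (fun w => X w ^+ 2)%R))%:E.
  rewrite fineK //; apply/fin_numPlt/andP; split => //.
  exact: lt_le_trans (ltNyr 0%R) hX0.
have finB : Ehat Pset (fun w => Y w ^+ 2)%R = (fine (Ehat Pset (fun w => Y w ^+ 2)%R))%:E.
  rewrite fineK //; apply/fin_numPlt/andP; split => //.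
  exact: lt_le_trans (ltNyr 0%R) hY0.
set A2 := fine (Ehat Pset (fun w => X w ^+ 2)%R) in finA.
set B2 := fine (Ehat Pset (fun w => Y w ^+ 2)%R) in finB.
have A20 : (0 <= A2)%R by rewrite -lee_fin -finA.
have B20 : (0 <= B2)%R by rewrite -lee_fin -finB.
have iX2 : forall P, Pset P -> \int[P]_w (X w ^+ 2)%:E < +oo.
  move=> P IP; apply: le_lt_trans hX2.
  exact: (ereal_sup_ubound (ex_intro2 _ _ P IP erefl)).
have iY2 : forall P, Pset P -> \int[P]_w (Y w ^+ 2)%:E < +oo.
  move=> P IP; apply: le_lt_trans hY2.
  exact: (ereal_sup_ubound (ex_intro2 _ _ P IP erefl)).
have sA : forall P, Pset P -> (Rintegral P setT (fun w => X w ^+ 2) <= A2)%R.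
  move=> P IP; rewrite -lee_fin -finA -EFin_Ri //; last exact: (iXX mX (iX2 P IP)).
  exact: (ereal_sup_ubound (ex_intro2 _ _ P IP erefl)).
have sB : forall P, Pset P -> (Rintegral P setT (fun w => Y w ^+ 2) <= B2)%R.
  move=> P IP; rewrite -lee_fin -finB -EFin_Ri //; last exact: (iXX mY (iY2 P IP)).
  exact: (ereal_sup_ubound (ex_intro2 _ _ P IP erefl)).
pose xf := fun P : probability T R => Rintegral P setT X.
pose yf := fun P : probability T R => Rintegral P setT Y.
pose cf := fun P : probability T R => Rintegral P setT (fun w => X w * Y w)%R.
pose vf := fun P => (cf P - xf P * yf P)%R.
pose B := ((A2 + B2) + (1 + A2) * (1 + B2))%R.
have hxB : forall P, Pset P -> (`|xf P| <= 1 + A2)%R.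
  move=> P IP; apply: le_trans (bnd_x mX mY (iX2 P IP) (iY2 P IP)) _.
  by rewrite lerD2l sA.
have hyB : forall P, Pset P -> (`|yf P| <= 1 + B2)%R.
  move=> P IP; apply: le_trans (bnd_y mX mY (iX2 P IP) (iY2 P IP)) _.
  by rewrite lerD2l sB.
have hcB : forall P, Pset P -> (`|cf P| <= A2 + B2)%R.
  move=> P IP; apply: le_trans (bnd_c mX mY (iX2 P IP) (iY2 P IP)) _.
  by apply: lerD; [exact: sA|exact: sB].
have hx : forall P, Pset P -> (`|xf P| <= B)%R.
  move=> P IP; apply: le_trans (hxB P IP) _; rewrite /B; nra.
have hy : forall P, Pset P -> (`|yf P| <= B)%R.
  move=> P IP; apply: le_trans (hyB P IP) _; rewrite /B; nra.
have hv : forall P, Pset P -> (`|vf P| <= B)%R.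
  move=> P IP; rewrite /vf /B; apply: le_trans (ler_normB _ _) _.
  apply: lerD; first exact: hcB.
  rewrite normrM; apply: ler_pM => //; [exact: hxB|exact: hyB].
have eL : forall m1 m2, Ehat Pset (fun w => (X w - m1) * (Y w - m2))%R =
    Eh Pset (Lq xf yf vf m1 m2).
  move=> m1 m2; rewrite /Ehat /Eh; congr ereal_sup; apply: eq_imagel => P IP.
  rewrite (L_eq mX mY (iX2 P IP) (iY2 P IP)).
  by congr EFin; rewrite /Lq /vf /cf /xf /yf; ring.
have eN : forall m1 m2, Ehat Pset (fun w => - ((X w - m1) * (Y w - m2)))%R =
    Eh Pset (fun P => - Lq xf yf vf m1 m2 P)%R.
  move=> m1 m2; rewrite /Ehat /Eh; congr ereal_sup; apply: eq_imagel => P IP.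
  rewrite (L_neg mX mY (iX2 P IP) (iY2 P IP)).
  by congr EFin; rewrite /Lq /vf /cf /xf /yf; ring.
have eX : Ehat Pset X = Eh Pset xf.
  rewrite /Ehat /Eh; congr ereal_sup; apply: eq_imagel => P IP.
  by rewrite (X_eq mX (iX2 P IP)).
have eY : Ehat Pset Y = Eh Pset yf.
  rewrite /Ehat /Eh; congr ereal_sup; apply: eq_imagel => P IP.
  by rewrite (Y_eq mY (iY2 P IP)).
have eXn : Ehat Pset (fun w => - X w)%R = Eh Pset (fun P => - xf P)%R.
  rewrite /Ehat /Eh; congr ereal_sup; apply: eq_imagel => P IP.
  by rewrite (X_neg mX mY (iX2 P IP) (iY2 P IP)).
have eYn : Ehat Pset (fun w => - Y w)%R = Eh Pset (fun P => - yf P)%R.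
  rewrite /Ehat /Eh; congr ereal_sup; apply: eq_imagel => P IP.
  by rewrite (Y_neg mX mY (iX2 P IP) (iY2 P IP)).
rewrite /upperC /lowerC /Mset eX eY eXn eYn.
split.
- rewrite (congr_supinf _ _ _ _ _ eL) (congr_supinf _ _ _ _ _ eL).
  exact: (upper_pure P0 hx hy hv).
- have eN' : forall m1 m2, - Ehat Pset (fun w => - ((X w - m1) * (Y w - m2)))%R =
      - Eh Pset (fun P => - Lq xf yf vf m1 m2 P)%R by move=> m1 m2; rewrite eN.
  rewrite (congr_infsup _ _ _ _ _ eN') (congr_infsup _ _ _ _ _ eN').
  exact: (@lower_pure _ _ _ _ _ _ _ P0 hx hy hv).
Qed.
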